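(* Let $G$ be a graph. If $H$ is a maximal $r$-correspondence-deletable subgraph of $G$ (i.e., no $r$-correspondence-deletable subgraph of $G$ properly contains $H$), then $G-V(H)$ does not contain an $r$-correspondence-deletable subgraph (with respect to $G-V(H)$).
   Context: All graphs are finite and simple. A correspondence assignment for a graph $H$ is a pair $(L,M)$ where $L$ assigns to each vertex $v$ a list $L(v)$ of colours and $M$ assigns to each edge $e=uv$ a partial matching $M_e$ between $\{u\}\times L(u)$ and $\{v\}\times L(v)$; an $(L,M)$-colouring is a choice $\varphi(v)\in L(v)$ for every $v$ such that for every edge $uv$, $(u,\varphi(u))$ and $(v,\varphi(v))$ are not matched in $M_{uv}$. A nonempty induced subgraph $H$ of a graph $G$ is $r$-correspondence-deletable (in $G$) if for every correspondence assignment $(L,M)$ of $H$ with $|L(v)|\ge r-(\deg_G(v)-\deg_H(v))$ for each $v\in V(H)$, $H$ has an $(L,M)$-colouring. *)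

(* Defs.v *)
From mathcomp Require Import all_boot.
Set Implicit Arguments. Unset Strict Implicit. Unset Printing Implicit Defensive.

(* A finite simple graph: vertex type T : finType, adjacency e : rel T,
   assumed symmetric and irreflexive in the theorem.
   Induced subgraphs are given by their vertex sets {set T}.
   Colours are natural numbers; a list L v is a duplicate-free seq nat. *)

Definition deg_in (T : finType) (e : rel T) (A : {set T}) (v : T) : nat :=
  #|[set u in A | e v u]|.

(* (L, M) is a correspondence assignment for the induced subgraph on S:
   L v is a list (duplicate-free) of colours; M u c v d means that
   (u, c) and (v, d) are matched in M_{uv}.  For every edge uv of G[S],
   M_{uv} is a partial matching between {u} x L(u) and {v} x L(v). *)
Definition corr_assignment (T : finType) (e : rel T) (S : {set T})
    (L : T -> seq nat) (M : T -> nat -> T -> nat -> bool) : Prop :=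
  (forall v, v \in S -> uniq (L v)) /\
  (forall u v, u \in S -> v \in S -> e u v ->
     (forall c d, M u c v d -> (c \in L u) /\ (d \in L v)) /\
     (forall c d, M u c v d = M v d u c) /\
     (forall c d d', M u c v d -> M u c v d' -> d = d')).

Definition LM_colouring (T : finType) (e : rel T) (S : {set T})
    (L : T -> seq nat) (M : T -> nat -> T -> nat -> bool) (phi : T -> nat) : Prop :=
  (forall v, v \in S -> phi v \in L v) /\
  (forall u v, u \in S -> v \in S -> e u v -> ~~ M u (phi u) v (phi v)).

(* H = G'[S] is an r-correspondence-deletable (nonempty induced) subgraph of
   the graph G' = G[A]. *)
Definition corr_deletable (T : finType) (e : rel T) (A : {set T}) (r : nat)
    (S : {set T}) : Prop :=
  S \subset A /\ S != set0 /\
  forall (L : T -> seq nat) (M : T -> nat -> T -> nat -> bool),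
    corr_assignment e S L M ->
    (forall v, v \in S -> r - (deg_in e A v - deg_in e S v) <= size (L v)) ->
    exists phi : T -> nat, LM_colouring e S L M phi.

(* Main.v *)
Require Import Defs.
From mathcomp Require Import all_boot.
From mathcomp Require Import zify.

Lemma deg_U (T : finType) (e : rel T) (A B C : {set T}) (v : T) :
  (forall u, (u \in A) = (u \in B) || (u \in C)) ->
  (forall u, u \in B -> u \in C -> False) ->
  deg_in e A v = deg_in e B v + deg_in e C v.
Proof.
move=> HA HBC; rewrite /deg_in.
have -> : [set u in A | e v u] = [set u in B | e v u] :|: [set u in C | e v u].
  by apply/setP => u; rewrite !inE HA; case: (u \in B); case: (u \in C); case: (e v u).
rewrite cardsU.
have -> : [set u in B | e v u] :&: [set u in C | e v u] = set0.
  apply/setP => u; rewrite !inE.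
  case Hb: (u \in B); case Hc: (u \in C) => //=; last by rewrite andbF.
  by case: (HBC u Hb Hc).
by rewrite cards0 subn0.
Qed.

Theorem mainTheorem17 (T : finType) (e : rel T) (r : nat) (S : {set T}) :
  symmetric e -> irreflexive e ->
  corr_deletable e [set: T] r S ->
  (forall S' : {set T}, S \proper S' -> ~ corr_deletable e [set: T] r S') ->
  forall S' : {set T}, ~ corr_deletable e (~: S) r S'.
Proof.
move=> esym eirr [_ [Sne Sdel]] Hmax S' [S'sub [S'ne S'del]].
have S'S : forall u, u \in S' -> u \in S -> False.
  by move=> u /(subsetP S'sub); rewrite inE => /negP.
apply: (Hmax (S :|: S')).
  apply: properUl; apply/negP => HS.
  case/set0Pn: S'ne => x Hx.
  by apply: (S'S x Hx); apply: (subsetP HS).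
split; first exact: subsetT.
split.
  case/set0Pn: Sne => x Hx; apply/set0Pn; exists x; by rewrite inE Hx.
move=> L M [Luniq Mprop] Hsize.
set U := S :|: S'.
have degT : forall v, deg_in e [set: T] v = deg_in e S v + deg_in e (~: S) v.
  move=> v; apply: deg_U => [u|u]; first by rewrite !inE; case: (u \in S).
  by rewrite inE => ->.
have degU : forall v, deg_in e U v = deg_in e S v + deg_in e S' v.
  move=> v; apply: deg_U => [u|u]; first by rewrite !inE.
  by move=> H1 H2; apply: (S'S u H2 H1).
have degNS : forall v, deg_in e S' v <= deg_in e (~: S) v.
  move=> v; apply: subset_leq_card; apply/subsetP => u; rewrite !inE.
  case/andP => Hu ->; rewrite andbT; apply/negP; exact: S'S Hu.
have inU1 : forall u, u \in S -> u \in U by move=> u Hu; rewrite inE Hu.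
have inU2 : forall u, u \in S' -> u \in U by move=> u Hu; rewrite inE Hu orbT.
have [phi [phiin phiok]] : exists phi, LM_colouring e S' L M phi.
  apply: S'del.
    split; first by move=> v Hv; apply: Luniq; apply: inU2.
    by move=> u v Hu Hv; apply: Mprop; apply: inU2.
  move=> v Hv; have := Hsize v (inU2 _ Hv); rewrite degT degU.
  have := degNS v; lia.
pose bad v c := [exists u, (u \in S') && e v u && M v c u (phi u)].
pose L' v := [seq c <- L v | ~~ bad v c].
pose M' u c v d := [&& M u c v d, c \in L' u & d \in L' v].
have key : forall v, v \in S -> size (L v) <= size (L' v) + deg_in e S' v.
  move=> v Hv.
  rewrite -(count_predC (fun c => ~~ bad v c)) size_filter leq_add2l.
  pose cu u := nth 0 (L v) (find (fun c => M v c u (phi u)) (L v)).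
  have -> : deg_in e S' v = size (map cu (enum [set u in S' | e v u])).
    by rewrite size_map -cardE.
  rewrite -size_filter; apply: uniq_leq_size.
    by apply: filter_uniq; apply: Luniq; apply: inU1.
  move=> c; rewrite mem_filter /= negbK => /andP [/existsP [u /andP [/andP [Hu Hvu] Hm]] Hc].
  apply/mapP; exists u; first by rewrite mem_enum inE Hu Hvu.
  have Hhas : has (fun c => M v c u (phi u)) (L v) by apply/hasP; exists c.
  have := nth_find 0 Hhas; rewrite -/(cu u) => Hm'.
  have [_ [Hs _]] := Mprop v u (inU1 _ Hv) (inU2 _ Hu) Hvu.
  have [_ [_ Hun]] := Mprop u v (inU2 _ Hu) (inU1 _ Hv) ltac:(by rewrite esym).
  by apply: (Hun (phi u)); rewrite -Hs.
have [psi [psiin psiok]] : exists psi, LM_colouring e S L' M' psi.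
  apply: Sdel.
    split; first by move=> v Hv; apply: filter_uniq; apply: Luniq; apply: inU1.
    move=> u v Hu Hv Huv.
    have [_ [Hs Hun]] := Mprop u v (inU1 _ Hu) (inU1 _ Hv) Huv.
    split; first by move=> c d /and3P [_ -> ->].
    split; first by move=> c d; rewrite /M' Hs; case: (M v d u c); case: (c \in L' u); case: (d \in L' v).
    by move=> c d d' /and3P [H1 _ _] /and3P [H2 _ _]; apply: (Hun c).
  move=> v Hv; have := Hsize v (inU1 _ Hv); have := key v Hv.
  rewrite degT degU; have := degNS v; lia.
exists (fun v => if v \in S then psi v else phi v); split.
  move=> v; rewrite inE; case Hv: (v \in S) => /= H.
    by have := psiin v Hv; rewrite mem_filter => /andP [].
  exact: phiin.
have crossed : forall u v, u \in S -> v \in S' -> e u v -> ~~ M u (psi u) v (phi v).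
  move=> u v Hu Hv Huv; have := psiin u Hu; rewrite mem_filter => /andP [Hb _].
  apply/negP => Hm; move/negP: Hb; apply; apply/existsP; exists v.
  by rewrite Hv Huv Hm.
move=> u v; rewrite !inE => Hu Hv Huv.
case Su: (u \in S); case Sv: (v \in S).
- have := psiok u v Su Sv Huv; rewrite /M' (psiin u Su) (psiin v Sv) !andbT //.
- by apply: crossed => //; move: Hv; rewrite Sv.
- have Hu' : u \in S' by move: Hu; rewrite Su.
  have [_ [Hs _]] := Mprop u v (inU2 u Hu') (inU1 v Sv) Huv.
  rewrite Hs. apply: crossed => //; by rewrite esym.
- apply: phiok => //; [move: Hu; rewrite Su | move: Hv; rewrite Sv] => //.
Qed.
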